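(* For every connected graph $G$, the ordered pair $(O_{\rm SR}(G),O_{\rm R}(G))$ belongs to the set $\{(\mathcal{B},\mathcal{B}),(\mathcal{B},\mathcal{N}),(\mathcal{B},\mathcal{M}),(\mathcal{N},\mathcal{N}),(\mathcal{N},\mathcal{M}),(\mathcal{M},\mathcal{M})\}$.
   Context: All graphs are finite, simple and undirected; $d(x,y)$ is the shortest-path distance. For a connected graph $G$, a set $R\subseteq V(G)$ is a resolving set if for all distinct $x,y\in V(G)$ there is $z\in R$ with $d(x,z)\ne d(y,z)$; a set $S\subseteq V(G)$ is a strong resolving set if for all distinct $x,y\in V(G)$ there exists $z\in S$ such that $x$ lies on a $y$–$z$ geodesic or $y$ lies on an $x$–$z$ geodesic. In the Maker–Breaker resolving game (resp. strong resolving game) on $G$, Maker and Breaker alternately select a not-yet-chosen vertex of $G$; Maker wins if his selected vertices contain a resolving set (resp. strong resolving set) of $G$, and Breaker wins otherwise. In the M-game Maker moves first, in the B-game Breaker moves first. The outcome $O_{\rm R}(G)$ (resp. $O_{\rm SR}(G)$) is $\mathcal{M}$ if Maker has a winning strategy in both the M-game and the B-game, $\mathcal{B}$ if Breaker has a winning strategy in both, and $\mathcal{N}$ if the first player has a winning strategy in each. *)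

(* Defs.v *)
From mathcomp Require Import all_boot.
Set Implicit Arguments. Unset Strict Implicit. Unset Printing Implicit Defensive.

Section Graphs.
Variables (T : finType) (e : rel T).

Definition simple_graph : Prop := symmetric e /\ irreflexive e.
Definition connected_graph : Prop := forall x y : T, connect e x y.

Fixpoint reach (n : nat) (x y : T) : bool :=
  match n with
  | 0 => x == y
  | n'.+1 => reach n' x y || [exists z, e x z && reach n' z y]
  end.

(* shortest-path distance: least n with a walk of length <= n from x to y
   (in a connected graph every distance is < #|T|, so the default #|T| is
   never attained) *)
Definition dist (x y : T) : nat :=
  \big[minn/#|T|]_(n < #|T| | reach n x y) n.

(* x lies on some y--z geodesic: a walk y = v0, v1, ..., vk = z with
   k = d(y,z) passing through x *)
Definition on_geodesic (x y z : T) : bool :=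
  [exists p : (dist y z).-tuple T,
     [&& path e y p, last y p == z & x \in y :: p]].

Definition resolving (R : {set T}) : bool :=
  [forall x, forall y, (x != y) ==> [exists z in R, dist x z != dist y z]].

Definition strong_resolving (S : {set T}) : bool :=
  [forall x, forall y, (x != y) ==>
     [exists z in S, on_geodesic x y z || on_geodesic y x z]].

(* Maker-Breaker game: Maker wins iff his final set contains a set with
   property P. makerWins n maker_to_move M B : Maker has a winning
   strategy from position (M, B) (n is fuel >= number of free vertices). *)
Fixpoint makerWins (P : {set T} -> bool) (n : nat) (maker_to_move : bool)
    (M B : {set T}) : bool :=
  let win := [exists R : {set T}, (R \subset M) && P R] in
  match n with
  | 0 => win
  | n'.+1 =>
    if [forall v, v \in M :|: B] then win
    else if maker_to_move then
      [exists v, (v \notin M :|: B) && makerWins P n' false (v |: M) B]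
    else
      [forall v, (v \notin M :|: B) ==> makerWins P n' true M (v |: B)]
  end.

Definition makerWins_Mgame (P : {set T} -> bool) : bool :=
  makerWins P #|T| true set0 set0.
Definition makerWins_Bgame (P : {set T} -> bool) : bool :=
  makerWins P #|T| false set0 set0.

End Graphs.

(* Outcomes. OP (second player wins both games) is included only so that
   the outcome function is total; the theorem asserts it never occurs. *)
Inductive outcome := OB | ON | OM | OP.

Definition game_outcome (mM mB : bool) : outcome :=
  match mM, mB with
  | true, true => OM
  | false, false => OB
  | true, false => ON     (* first player wins each game *)
  | false, true => OP
  end.

Definition O_R (T : finType) (e : rel T) : outcome :=
  game_outcome (@makerWins_Mgame T (resolving e)) (@makerWins_Bgame T (resolving e)).
Definition O_SR (T : finType) (e : rel T) : outcome :=
  game_outcome (@makerWins_Mgame T (strong_resolving e))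
               (@makerWins_Bgame T (strong_resolving e)).

(* Main.v *)
Require Import Defs.
From mathcomp Require Import all_boot.
From mathcomp Require Import zify.

Section Aux.
Variables (T : finType).

Lemma bigmin_le (r : seq 'I_#|T|) (P : pred 'I_#|T|) (j : 'I_#|T|) d :
  j \in r -> P j -> \big[minn/d]_(i <- r | P i) (i : nat) <= j.
Proof.
elim: r => [|a r IH] //=. rewrite in_cons big_cons => /orP [/eqP <-|jr] Pj.
  by rewrite Pj geq_minl.
case: (P a); last exact: IH.
by apply: leq_trans (geq_minr _ _) (IH jr Pj).
Qed.

Variable e : rel T.

Lemma path_reach (q : seq T) (x : T) : path e x q -> reach e (size q) x (last x q).
Proof.
elim: q x => [|a q IH] x /=; first by rewrite eqxx.
move=> /andP [exa pa]; apply/orP; right; apply/existsP; exists a.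
by rewrite exa IH.
Qed.

Lemma dist_le L x z : reach e L x z -> L < #|T| -> dist e x z <= L.
Proof.
move=> R LT; rewrite /dist.
have := @bigmin_le (index_enum 'I_#|T|) (fun n : 'I_#|T| => reach e n x z) (Ordinal LT) #|T|.
by rewrite mem_index_enum /=; apply.
Qed.

Lemma dist_leT x z : dist e x z <= #|T|.
Proof.
rewrite /dist; elim/big_rec: _ => // i m _ H.
by apply: leq_trans (geq_minr _ _) H.
Qed.

Lemma geod_lt x y z : x != y -> on_geodesic e x y z -> dist e x z < dist e y z.
Proof.
move=> xy /existsP [p /and3P [pp lz xin]].
rewrite in_cons (negPf xy) /= in xin.
have sz : size p = dist e y z by rewrite size_tuple.
set i := index x p.
have ilt : i < size p by rewrite index_mem.
have Ep : (p : seq T) = take i p ++ x :: drop i.+1 p.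
  by rewrite -{1}(cat_take_drop i p) (drop_nth x ilt) nth_index.
have pp' : path e x (drop i.+1 p).
  move: pp; rewrite {1}Ep cat_path /= => /andP [_ /andP [_ //]].
have lz' : last x (drop i.+1 p) = z.
  by move: lz; rewrite {1}Ep last_cat /= => /eqP.
have R := path_reach _ _ pp'; rewrite lz' size_drop in R.
have h1 : size p - i.+1 < size p by lia.
rewrite sz in h1.
have D := dist_le _ _ _ R.
have DT : dist e y z <= #|T| := dist_leT _ _.
rewrite sz in D.
have D' := D (leq_trans h1 DT).
lia.
Qed.

Lemma strong_res S : strong_resolving e S -> resolving e S.
Proof.
move=> /forallP H; apply/forallP => x; apply/forallP => y; apply/implyP => xy.
have /forallP H2 := H x; have /implyP H3 := H2 y.
have /existsP [z /andP [zS /orP G]] := H3 xy.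
apply/existsP; exists z; rewrite zS /=.
case: G => G.
  by rewrite neq_ltn (geod_lt _ _ _ xy G).
by rewrite neq_ltn (geod_lt _ _ _ _ G) ?orbT // eq_sym.
Qed.

Definition win (P : {set T} -> bool) (M : {set T}) := [exists R : {set T}, (R \subset M) && P R].

Lemma win_mono P (M M' : {set T}) : M \subset M' -> win P M -> win P M'.
Proof.
move=> s /existsP [R /andP [RM PR]]; apply/existsP; exists R.
by rewrite PR (subset_trans RM s).
Qed.

Lemma lemA P n b (M B : {set T}) : makerWins P n b M B -> win P (M :|: ~: B).
Proof.
elim: n b M B => [|n IH] b M B /=.
  by apply: win_mono; apply: subsetUl.
case: ifP => [_|/negbT]; first by apply: win_mono; apply: subsetUl.
move=> /forallPn [v vf].
case: b.
  move=> /existsP [w /andP [wf W]]; have := IH _ _ _ W; apply: win_mono.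
  apply/subsetP => x; rewrite !inE => /orP [/orP [/eqP ->|->]|->]; rewrite ?orbT //.
  by move: wf; rewrite !inE negb_or => /andP [_ ->]; rewrite orbT.
move=> /forallP /(_ v) /implyP /(_ vf) W; have := IH _ _ _ W; apply: win_mono.
apply/subsetP => x; rewrite !inE => /orP [->//|]; rewrite negb_or => /andP [_ ->].
by rewrite orbT.
Qed.

Arguments lemA {P n b M B}.

Lemma lemD P n b (M B : {set T}) : win P M -> makerWins P n b M B.
Proof.
elim: n b M B => [|n IH] b M B W //=.
case: ifP => // /negbT /forallPn [v vf].
case: b.
  apply/existsP; exists v; rewrite vf /=; apply: IH; apply: win_mono W.
  exact: subsetUr.
by apply/forallP => w; apply/implyP => _; apply: IH.
Qed.

Arguments lemD {P} n b {M} B.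
Arguments win_mono {P M M'}.

Lemma mono P n' n b (M B M' B' : {set T}) :
  (#|~: (M' :|: B')| <= n' \/ n <= n') -> M \subset M' -> B' \subset B ->
  B \subset M' :|: B' -> makerWins P n b M B -> makerWins P n' b M' B'.
Proof.
elim: n' n b M B M' B' => [|n' IH] n b M B M' B' Hf sM sB sB2 W.
  case: Hf => [|]; last first.
    by rewrite leqn0 => /eqP n0; move: W; rewrite n0 /=; apply: win_mono.
  rewrite leqn0 cards_eq0 => /eqP c0.
  have := lemA W; apply: win_mono; apply/subsetP => x; rewrite inE => /orP [/(subsetP sM)//|].
  have : x \notin ~: (M' :|: B') by rewrite c0 inE.
  rewrite !inE negbK => /orP [->//|xB' xB]; by rewrite (subsetP sB) in xB.
rewrite /=; case: ifP => [/forallP all|/negbT /forallPn [u uf]].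
  have := lemA W; apply: win_mono; apply/subsetP => x; rewrite inE => /orP [/(subsetP sM)//|].
  have := all x; rewrite !inE => /orP [->//|xB' xB]; by rewrite (subsetP sB) in xB.
case: n Hf W => [|n] Hf W.
  have nf : [forall v, v \in M' :|: B'] = false.
    by apply/negP => /forallP /(_ u); rewrite (negPf uf).
  by move: (lemD n'.+1 b B' (win_mono sM W)) => /=; rewrite nf.
have ufree : ~~ [forall v, v \in M :|: B].
  apply/forallPn; exists u; move: uf; rewrite !inE !negb_or => /andP [uM uB].
  apply/andP; split; first by apply: contra uM; apply/subsetP.
  by apply: contra uB => ub; move: (subsetP sB2 u ub); rewrite inE (negPf uM).
have cf : forall w, w \notin M' :|: B' ->
    #|~: (w |: M' :|: B')| <= n' \/ n <= n'.
  move=> w wf; case: Hf => [H|H]; [left|right]; last by [].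
  have : #|~: (w |: M' :|: B')| < #|~: (M' :|: B')|.
    apply: proper_card; rewrite properE; apply/andP; split.
      by rewrite setCS -setUA subsetUr.
    apply/subsetPn; exists w; first by rewrite inE.
    by rewrite !inE eqxx.
  move=> lt; rewrite -ltnS; exact: leq_trans lt H.
have cfB : forall w, w \notin M' :|: B' ->
    #|~: (M' :|: (w |: B'))| <= n' \/ n <= n'.
  by move=> w wf; rewrite setUCA setUA; apply: cf.
move: W => /=; rewrite (negPf ufree).
case: b.
  move=> /existsP [v /andP [vf W]].
  case vf' : (v \in M' :|: B').
    apply/existsP; exists u; rewrite uf /=.
    apply: (IH _ _ _ _ _ _ (cf u uf) _ sB _ W).
      rewrite subUset sub1set (subset_trans sM (subsetUr _ _)) andbT !inE; apply/orP; right.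
      move: vf'; rewrite inE => /orP [//|vB'].
      by move: vf; rewrite inE (subsetP sB _ vB') orbT.
    by apply: subset_trans sB2 _; rewrite -setUA subsetUr.
  apply/existsP; exists v; rewrite vf' /=.
  apply: (IH _ _ _ _ _ _ (cf v (negbT vf')) _ sB _ W).
    by apply: setUS.
  by apply: subset_trans sB2 _; rewrite -setUA subsetUr.
move=> /forallP W; apply/forallP => w; apply/implyP => wf.
have wf0 : w \notin M :|: B.
  move: wf; rewrite !inE !negb_or => /andP [wM wB].
  apply/andP; split; first by apply: contra wM; apply/subsetP.
  by apply: contra wB => wb; move: (subsetP sB2 w wb); rewrite inE (negPf wM).
have := W w; rewrite wf0 /= => W'.
apply: (IH _ _ _ _ _ _ (cfB w wf) sM _ _ W').
  by apply: setUS.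
apply/subsetP => x; rewrite !inE => /orP [->|xB]; rewrite ?orbT //.
by move: (subsetP sB2 x xB); rewrite !inE => /orP [->|->]; rewrite ?orbT.
Qed.

Lemma BtoM P : @makerWins_Bgame T P -> @makerWins_Mgame T P.
Proof.
rewrite /makerWins_Bgame /makerWins_Mgame.
case En : #|T| => [|n] // W.
have : 0 < #|T| by rewrite En.
case/card_gt0P => v _.
rewrite /= (_ : [forall v, v \in set0 :|: set0] = false); last first.
  by apply/negP => /forallP /(_ v); rewrite !inE.
apply/existsP; exists v; rewrite !inE /=.
apply: (mono P n n.+1 false set0 set0 (v |: set0) set0 _ _ _ _ W).
- left; rewrite setU0 setU0 cardsCs setCK cards1 En.
  by rewrite subn1.
- exact: sub0set.
- exact: sub0set.
- exact: sub0set.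
Qed.

Lemma predmono (P Q : {set T} -> bool) n b M B :
  (forall R, P R -> Q R) -> makerWins P n b M B -> makerWins Q n b M B.
Proof.
move=> PQ.
have wq : forall M : {set T}, win P M -> win Q M.
  by move=> M0 /existsP [R /andP [RM PR]]; apply/existsP; exists R; rewrite RM PQ.
elim: n b M B => [|n IH] b M B /=; first exact: wq.
case: ifP => _; first exact: wq.
case: b.
  by move=> /existsP [v /andP [vf W]]; apply/existsP; exists v; rewrite vf IH.
by move=> /forallP W; apply/forallP => v; apply/implyP => vf; apply: IH; apply: (implyP (W v)).
Qed.

End Aux.

Theorem mainTheorem5 (T : finType) (e : rel T) :
  simple_graph e -> connected_graph e ->
  let p := (O_SR e, O_R e) in
  p = (OB, OB) \/ p = (OB, ON) \/ p = (OB, OM) \/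
  p = (ON, ON) \/ p = (ON, OM) \/ p = (OM, OM).
Proof.
move=> _ _ /=.
have sr := @strong_res T e.
have h1 : @makerWins_Mgame T (strong_resolving e) -> @makerWins_Mgame T (resolving e).
  exact: predmono.
have h2 : @makerWins_Bgame T (strong_resolving e) -> @makerWins_Bgame T (resolving e).
  exact: predmono.
have h3 := @BtoM T (strong_resolving e).
have h4 := @BtoM T (resolving e).
rewrite /O_SR /O_R.
move: h1 h2 h3 h4.
case: (makerWins_Mgame _); case: (makerWins_Bgame _);
case: (makerWins_Mgame _); case: (makerWins_Bgame _) => /= H1 H2 H3 H4;
  try (by have := H1 erefl); try (by have := H2 erefl); try (by have := H3 erefl);
  try (by have := H4 erefl); tauto.
Qed.
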